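(* Let $n\ge1$. For all $w_1,w_2\in\mathrm{BB}_n$ and $\gamma\in\Gamma_{n+1}=\{1,e_n,X_n,Y_{n+1}\}$ one has $\epsilon_n(w_1\gamma w_2)=\mathrm{tr}(\gamma)\,w_1w_2$ and $\mathrm{tr}(w_1\gamma w_2)=\mathrm{tr}(\gamma)\,\mathrm{tr}(w_1w_2)$.
   Context: $R$ is an integral domain with units $q,\lambda,x,q_0$ and elements $A,q_1$; $\delta=q-q^{-1}$; standing assumptions $x\delta=\delta-\lambda+\lambda^{-1}$, $q_0=q^{-1}$, $A(1-q_0\lambda)=q_1x$. $\mathrm{BB}_n$ is the unital associative $R$-algebra generated by invertible $Y,X_1,\dots,X_{n-1}$ and elements $e_1,\dots,e_{n-1}$ with relations: $X_iX_j=X_jX_i$, $e_ie_j=e_je_i$ for $|i-j|>1$; $X_iX_jX_i=X_jX_iX_j$ for $|i-j|=1$; $X_ie_i=e_iX_i=\lambda e_i$; $e_i^2=xe_i$; $X_i^{-1}=X_i-\delta+\delta e_i$; $X_i^2=1+\delta X_i-\delta\lambda e_i$; for $|i-j|=1$ (signs consistent): $e_iX_j^{\pm1}e_i=\lambda^{\mp1}e_i$, $e_ie_je_i=e_i$, $e_iX_j^{\pm1}X_i^{\pm1}=X_j^{\pm1}X_i^{\pm1}e_j$, $X_i^{\pm1}e_je_i=X_j^{\mp1}e_i$, $e_ie_jX_i^{\pm1}=e_iX_j^{\mp1}$, $e_iX_j^{\pm1}X_i^{\pm1}=e_ie_j$, $X_i^{\pm1}X_j^{\pm1}e_i=e_je_i$,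 $X_ie_jX_i^{-1}=X_j^{-1}e_iX_j$, $X_ie_jX_i=X_j^{-1}e_iX_j^{-1}$; and $X_1YX_1Y=YX_1YX_1$, $Y^2=q_1Y+q_0$, $YX_1Ye_1=e_1$, $YX_i=X_iY$ ($i>1$), $e_1Ye_1=Ae_1$; it is assumed that $e_1\in\mathrm{BB}_2$ is nonzero with $re_1=0\Rightarrow r=0$, and $e_1,Ye_1$ linearly independent. $\mathrm{BB}_0=R$; $\mathrm{BB}_m\subset\mathrm{BB}_n$ ($m\le n$) as the subalgebra generated by $Y,X_i,e_i$ with $i\le m-1$. $Y_{n+1}:=X_nX_{n-1}\cdots X_1YX_1^{-1}\cdots X_n^{-1}$. Hypothesis (assumed): for every $n$ the map $\mathrm{BB}_n\to\mathrm{BB}_{n+2}$, $a\mapsto x^{-1}ae_{n+1}$, is injective. Conditional expectation: for $a\in\mathrm{BB}_{n+1}$, $\epsilon_n(a)\in\mathrm{BB}_n$ is the element with $e_{n+1}ae_{n+1}=x\,\epsilon_n(a)e_{n+1}$ in $\mathrm{BB}_{n+2}$. Trace: $\mathrm{tr}(r)=r$ on $\mathrm{BB}_0=R$ and $\mathrm{tr}(a)=\mathrm{tr}(\epsilon_{n-1}(a))$ for $a\in\mathrm{BB}_n$. *)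

(* Defs.v *)
From HB Require Import structures.
From mathcomp Require Import all_boot all_order all_algebra.
From Stdlib Require Import ClassicalEpsilon.
Set Implicit Arguments. Unset Strict Implicit. Unset Printing Implicit Defensive.
Import GRing.Theory.
Local Open Scope ring_scope.

(* Data of the tower BB_0 ⊂ BB_1 ⊂ BB_2 ⊂ ... realised inside one R-algebra
   [A] (think of A as the union BB_∞): the parameters of the paper and the
   generators Y, X_i, e_i (i >= 1). *)
Record BBdata (R : idomainType) (A : algType R) := BBData {
  bq : R; blam : R; bx : R; bq0 : R; bA : R; bq1 : R;
  bY : A; bX : nat -> A; be : nat -> A }.

Section Defs.
Variables (R : idomainType) (A : algType R) (D : @BBdata R A).

Definition bdelta : R := bq D - (bq D)^-1.

Definition bXinv (i : nat) : A := bX D i - bdelta%:A + bdelta *: be D i.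

Definition bXs (s : bool) (i : nat) : A := if s then bX D i else bXinv i.

(* Y_1 = Y, Y_{k+1} = X_k Y_k X_k^{-1}, so that
   Y_{n+1} = X_n ... X_1 Y X_1^{-1} ... X_n^{-1} *)
Fixpoint bYk (k : nat) : A :=
  match k with
  | 0 => bY D
  | 1 => bY D
  | m.+1 => bX D m * bYk m * bXinv m
  end.

Inductive inBB (n : nat) : A -> Prop :=
  | bb_scal (r : R) : inBB n (r%:A)
  | bb_Y : (1 <= n)%N -> inBB n (bY D)
  | bb_X (i : nat) : (1 <= i)%N -> (i < n)%N -> inBB n (bX D i)
  | bb_e (i : nat) : (1 <= i)%N -> (i < n)%N -> inBB n (be D i)
  | bb_add a b : inBB n a -> inBB n b -> inBB n (a + b)
  | bb_mul a b : inBB n a -> inBB n b -> inBB n (a * b).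

Definition beps (n : nat) (a : A) : A :=
  epsilon (inhabits 0) (fun z => inBB n z /\
     be D n.+1 * a * be D n.+1 = bx D *: (z * be D n.+1)).

Fixpoint btr (n : nat) (a : A) : R :=
  match n with
  | 0 => epsilon (inhabits 0) (fun r : R => a = r%:A)
  | m.+1 => btr m (beps m a)
  end.

Definition adj (i j : nat) := (i == j.+1) || (j == i.+1).
Definition far (i j : nat) := (j.+1 < i)%N || (i.+1 < j)%N.

Record BBaxioms : Prop := {
  ax_q_unit : bq D \is a GRing.unit;
  ax_lam_unit : blam D \is a GRing.unit;
  ax_x_unit : bx D \is a GRing.unit;
  ax_q0_unit : bq0 D \is a GRing.unit;
  ax_x_delta : bx D * bdelta = bdelta - blam D + (blam D)^-1;
  ax_q0 : bq0 D = (bq D)^-1;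
  ax_A : bA D * (1 - bq0 D * blam D) = bq1 D * bx D;
  ax_Y_inv : exists Yi : A, bY D * Yi = 1 /\ Yi * bY D = 1;
  ax_X_inv : forall i, (1 <= i)%N -> bX D i * bXinv i = 1 /\ bXinv i * bX D i = 1;
  ax_XX_far : forall i j, (1 <= i)%N -> (1 <= j)%N -> far i j ->
     bX D i * bX D j = bX D j * bX D i;
  ax_ee_far : forall i j, (1 <= i)%N -> (1 <= j)%N -> far i j ->
     be D i * be D j = be D j * be D i;
  ax_Xe_far : forall i j, (1 <= i)%N -> (1 <= j)%N -> far i j ->
     bX D i * be D j = be D j * bX D i;
  ax_braid : forall i j, (1 <= i)%N -> (1 <= j)%N -> adj i j ->
     bX D i * bX D j * bX D i = bX D j * bX D i * bX D j;
  ax_Xe : forall i, (1 <= i)%N -> bX D i * be D i = blam D *: be D i /\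
                                   be D i * bX D i = blam D *: be D i;
  ax_ee : forall i, (1 <= i)%N -> be D i * be D i = bx D *: be D i;
  ax_XX : forall i, (1 <= i)%N ->
     bX D i * bX D i = 1 + bdelta *: bX D i - (bdelta * blam D) *: be D i;
  ax_eXe : forall i j s, (1 <= i)%N -> (1 <= j)%N -> adj i j ->
     be D i * bXs s j * be D i = (if s then (blam D)^-1 else blam D) *: be D i;
  ax_eee : forall i j, (1 <= i)%N -> (1 <= j)%N -> adj i j ->
     be D i * be D j * be D i = be D i;
  ax_eXX : forall i j s, (1 <= i)%N -> (1 <= j)%N -> adj i j ->
     be D i * bXs s j * bXs s i = bXs s j * bXs s i * be D j;
  ax_Xee : forall i j s, (1 <= i)%N -> (1 <= j)%N -> adj i j ->
     bXs s i * be D j * be D i = bXs (~~ s) j * be D i;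
  ax_eeX : forall i j s, (1 <= i)%N -> (1 <= j)%N -> adj i j ->
     be D i * be D j * bXs s i = be D i * bXs (~~ s) j;
  ax_eXX' : forall i j s, (1 <= i)%N -> (1 <= j)%N -> adj i j ->
     be D i * bXs s j * bXs s i = be D i * be D j;
  ax_XXe : forall i j s, (1 <= i)%N -> (1 <= j)%N -> adj i j ->
     bXs s i * bXs s j * be D i = be D j * be D i;
  ax_XeXinv : forall i j, (1 <= i)%N -> (1 <= j)%N -> adj i j ->
     bX D i * be D j * bXinv i = bXinv j * be D i * bX D j;
  ax_XeX : forall i j, (1 <= i)%N -> (1 <= j)%N -> adj i j ->
     bX D i * be D j * bX D i = bXinv j * be D i * bXinv j;
  ax_YX1 : bX D 1 * bY D * bX D 1 * bY D = bY D * bX D 1 * bY D * bX D 1;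
  ax_Y2 : bY D * bY D = bq1 D *: bY D + (bq0 D)%:A;
  ax_YXYe : bY D * bX D 1 * bY D * be D 1 = be D 1;
  ax_YX : forall i, (1 < i)%N -> bY D * bX D i = bX D i * bY D;
  ax_Ye : forall i, (1 < i)%N -> bY D * be D i = be D i * bY D;
  ax_eYe : be D 1 * bY D * be D 1 = bA D *: be D 1;
  ax_e1_nz : be D 1 != 0;
  ax_e1_tf : forall r : R, r *: be D 1 = 0 -> r = 0;
  ax_e1_Ye1_indep : forall r s : R, r *: be D 1 + s *: (bY D * be D 1) = 0 ->
     r = 0 /\ s = 0;
  ax_inj : forall n a b, inBB n a -> inBB n b ->
     (bx D)^-1 *: (a * be D n.+1) = (bx D)^-1 *: (b * be D n.+1) -> a = b
}.

End Defs.

(* Main.v *)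
Require Import Defs.
From HB Require Import structures.
From mathcomp Require Import all_boot all_order all_algebra.
From Stdlib Require Import ClassicalEpsilon.
From mathcomp Require Import zify.
Import GRing.Theory.
Local Open Scope ring_scope.
Set Implicit Arguments. Unset Strict Implicit.

Section Proof.
Variables (R : idomainType) (A : algType R) (D : @BBdata R A).
Hypothesis ax : BBaxioms D.

Local Notation E := (be D).
Local Notation X := (bX D).
Local Notation Xi := (bXinv D).
Local Notation Y := (bY D).
Local Notation lam := (blam D).
Local Notation xp := (bx D).
Local Notation del := (bdelta D).
Local Notation BB := (inBB D).

Definition comm (a b : A) := a * b = b * a.

Lemma ctx2 (a b c : A) : a * b = c -> forall t, a * (b * t) = c * t.
Proof. by move=> H t; rewrite mulrA H. Qed.
Lemma ctx3 (a b c d : A) : a * b * c = d -> forall t, a * (b * (c * t)) = d * t.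
Proof. by move=> H t; rewrite !mulrA H. Qed.
Lemma ra3 (a b c d : A) : a * b * c = d -> a * (b * c) = d.
Proof. by move=> H; rewrite mulrA H. Qed.

Lemma adjS a : adj a.+1 a. Proof. by rewrite /adj eqxx. Qed.
Lemma adjS' a : adj a a.+1. Proof. by rewrite /adj eqxx orbT. Qed.
Lemma farL i j : (j.+1 < i)%N -> far i j. Proof. by rewrite /far => ->. Qed.
Lemma farR i j : (i.+1 < j)%N -> far i j. Proof. by rewrite /far => ->; rewrite orbT. Qed.

Lemma lamV : lam^-1 * lam = 1. Proof. by rewrite mulVr // (ax_lam_unit ax). Qed.
Lemma lamV' : lam * lam^-1 = 1. Proof. by rewrite mulrV // (ax_lam_unit ax). Qed.
Lemma xV : xp^-1 * xp = 1. Proof. by rewrite mulVr // (ax_x_unit ax). Qed.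
Lemma xV' : xp * xp^-1 = 1. Proof. by rewrite mulrV // (ax_x_unit ax). Qed.

Lemma XXi i : (1 <= i)%N -> X i * Xi i = 1. Proof. by move=> h; case: (ax_X_inv ax h). Qed.
Lemma XiX i : (1 <= i)%N -> Xi i * X i = 1. Proof. by move=> h; case: (ax_X_inv ax h). Qed.
Lemma XE i : (1 <= i)%N -> X i * E i = lam *: E i. Proof. by move=> h; case: (ax_Xe ax h). Qed.
Lemma EX i : (1 <= i)%N -> E i * X i = lam *: E i. Proof. by move=> h; case: (ax_Xe ax h). Qed.
Lemma EE i : (1 <= i)%N -> E i * E i = xp *: E i. Proof. exact: (ax_ee ax). Qed.
Lemma XiE i : (1 <= i)%N -> Xi i * E i = lam^-1 *: E i.
Proof.
move=> h; rewrite {1}(_ : E i = lam^-1 *: (X i * E i)); last by rewrite XE // scalerA lamV scale1r.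
by rewrite -scalerAr mulrA XiX // mul1r.
Qed.
Lemma EXi i : (1 <= i)%N -> E i * Xi i = lam^-1 *: E i.
Proof.
move=> h; rewrite {1}(_ : E i = lam^-1 *: (E i * X i)); last by rewrite EX // scalerA lamV scale1r.
by rewrite -scalerAl -mulrA XXi // mulr1.
Qed.

Lemma comm_Xi c i : comm c (X i) -> comm c (E i) -> comm c (Xi i).
Proof.
rewrite /comm /bXinv => h1 h2.
rewrite mulrDr mulrBr mulrDl mulrBl h1.
by rewrite -!scalerAr -!scalerAl ?mulr1 ?mul1r h2.
Qed.

Lemma comm_BB c m a : ((1 <= m)%N -> comm c Y) ->
  (forall i, (1 <= i)%N -> (i < m)%N -> comm c (X i)) ->
  (forall i, (1 <= i)%N -> (i < m)%N -> comm c (E i)) -> BB m a -> comm c a.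
Proof.
move=> hY hX hE; elim => //.
- by move=> r; rewrite /comm mulr_algr mulr_algl.
- by move=> a1 b1 _ h1 _ h2; rewrite /comm mulrDr mulrDl h1 h2.
- by move=> a1 b1 _ h1 _ h2; rewrite /comm mulrA h1 -mulrA h2 mulrA.
Qed.

Lemma BB_high m a i : BB m a -> (m < i)%N ->
  comm (X i) a /\ comm (E i) a /\ comm (Xi i) a.
Proof.
move=> hB hi.
have hX : comm (X i) a.
  apply: (comm_BB _ _ _ hB).
  - by move=> hm; rewrite /comm (ax_YX ax) //; lia.
  - move=> j h1 h2; apply: (ax_XX_far ax) => //; first by lia.
    by apply: farL; lia.
  - move=> j h1 h2; apply: (ax_Xe_far ax) => //; first by lia.
    by apply: farL; lia.
have hE : comm (E i) a.
  apply: (comm_BB _ _ _ hB).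
  - by move=> hm; rewrite /comm (ax_Ye ax) //; lia.
  - move=> j h1 h2; symmetry; apply: (ax_Xe_far ax) => //; first by lia.
    by apply: farR; lia.
  - move=> j h1 h2; apply: (ax_ee_far ax) => //; first by lia.
    by apply: farL; lia.
split=> //; split=> //.
move: hX hE; rewrite /comm => hX hE; symmetry; apply: comm_Xi; rewrite /comm //.
Qed.


Lemma ctx4 (a b c d f : A) : a * b * c * d = f -> forall t, a * (b * (c * (d * t))) = f * t.
Proof. by move=> H t; rewrite !mulrA H. Qed.
Lemma ra4 (a b c d f : A) : a * b * c * d = f -> a * (b * (c * d)) = f.
Proof. by move=> H; rewrite !mulrA H. Qed.

Ltac nrm := rewrite -?scalerAl -?scalerAr -?mulrA ?mulr1 ?mul1r.
Ltac rw H := first [rewrite (ctx4 H) | rewrite (ra4 H) | rewrite (ctx3 H) | rewrite (ra3 H)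
   | rewrite (ctx2 H) | rewrite H]; nrm.

Lemma BB_mono m m' a : (m <= m')%N -> BB m a -> BB m' a.
Proof.
move=> hm; elim => *; try by constructor.
- by apply: bb_Y; lia.
- by apply: bb_X => //; lia.
- by apply: bb_e => //; lia.
Qed.

Lemma BB_scale m r a : BB m a -> BB m (r *: a).
Proof. by move=> h; rewrite -mulr_algl; apply: bb_mul => //; apply: bb_scal. Qed.
Lemma BB_1 m : BB m 1.
Proof. by rewrite -(scale1r 1); apply: bb_scal. Qed.
Lemma BB_0 m : BB m 0.
Proof. by rewrite -(scale0r 1); apply: bb_scal. Qed.
Lemma BB_opp m a : BB m a -> BB m (- a).
Proof. by move=> h; rewrite -scaleN1r; apply: BB_scale. Qed.
Lemma BB_sub m a b : BB m a -> BB m b -> BB m (a - b).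
Proof. by move=> h1 h2; apply: bb_add => //; apply: BB_opp. Qed.
Lemma BB_Xi m i : (1 <= i)%N -> (i < m)%N -> BB m (Xi i).
Proof.
move=> h1 h2; rewrite /bXinv; apply: bb_add; first apply: BB_sub.
- exact: bb_X.
- exact: bb_scal.
- by apply: BB_scale; apply: bb_e.
Qed.

Lemma BB0_scalar a : BB 0 a -> exists r, a = r%:A.
Proof.
elim.
- by move=> r; exists r.
- by [].
- by move=> i h1 h2; lia.
- by move=> i h1 h2; lia.
- by move=> a1 b1 _ [r1 ->] _ [r2 ->]; exists (r1 + r2); rewrite scalerDl.
- by move=> a1 b1 _ [r1 ->] _ [r2 ->]; exists (r1 * r2); rewrite mulr_algl scalerA.
Qed.

Lemma alg_inj r s : r%:A = s%:A :> A -> r = s.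
Proof.
move=> h; apply/eqP; rewrite -subr_eq0; apply/eqP; apply: (ax_e1_tf ax).
by rewrite scalerBl -(mulr_algl r) -(mulr_algl s) h subrr.
Qed.

Definition Yinv : A := (bq0 D)^-1 *: (Y - (bq1 D)%:A).

Fixpoint Jf (k : nat) : A :=
  match k with
  | 0 => Y
  | 1 => Y
  | m.+1 => X m * Jf m * X m
  end.
Fixpoint Jinvf (k : nat) : A :=
  match k with
  | 0 => Yinv
  | 1 => Yinv
  | m.+1 => Xi m * Jinvf m * Xi m
  end.

Fact J_key : unit. Proof. by []. Qed.
Definition J := locked_with J_key Jf.
Definition Jinv := locked_with J_key Jinvf.
Lemma J1 : J 1 = Y. Proof. by rewrite /J unlock. Qed.
Lemma Jinv1 : Jinv 1 = Yinv. Proof. by rewrite /Jinv unlock. Qed.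
Lemma J_S m : (1 <= m)%N -> J m.+1 = X m * J m * X m.
Proof. by rewrite /J unlock; case: m. Qed.
Lemma Jinv_S m : (1 <= m)%N -> Jinv m.+1 = Xi m * Jinv m * Xi m.
Proof. by rewrite /Jinv unlock; case: m. Qed.
Lemma bYk_S m : (1 <= m)%N -> bYk D m.+1 = X m * bYk D m * Xi m.
Proof. by case: m. Qed.

Lemma J_BB b : (1 <= b)%N -> BB b (J b).
Proof.
elim: b => // b IH _; case: (posnP b) => [->|hb]; first by rewrite J1; apply: bb_Y.
rewrite J_S //; apply: bb_mul; first apply: bb_mul.
- by apply: bb_X.
- by apply: (BB_mono (m:=b)) => //; apply: IH.
- by apply: bb_X.
Qed.
Lemma Jinv_BB b : (1 <= b)%N -> BB b (Jinv b).
Proof.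
elim: b => // b IH _; case: (posnP b) => [->|hb].
  by rewrite Jinv1 /Yinv; apply: BB_scale; apply: BB_sub; [apply: bb_Y | apply: bb_scal].
rewrite Jinv_S //; apply: bb_mul; first apply: bb_mul.
- by apply: BB_Xi.
- by apply: (BB_mono (m:=b)) => //; apply: IH.
- by apply: BB_Xi.
Qed.
Lemma bYk_BB b : (1 <= b)%N -> BB b (bYk D b).
Proof.
elim: b => // b IH _; case: (posnP b) => [->|hb]; first by apply: bb_Y.
rewrite bYk_S //; apply: bb_mul; first apply: bb_mul.
- by apply: bb_X.
- by apply: (BB_mono (m:=b)) => //; apply: IH.
- by apply: BB_Xi.
Qed.

Lemma q0V : (bq0 D)^-1 * bq0 D = 1. Proof. by rewrite mulVr // (ax_q0_unit ax). Qed.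

Lemma JJinv b : (1 <= b)%N -> J b * Jinv b = 1 /\ Jinv b * J b = 1.
Proof.
elim: b => // b IH _; case: (posnP b) => [->|hb].
  rewrite J1 Jinv1 /Yinv -scalerAr -scalerAl mulrBr mulrBl (ax_Y2 ax) mulr_algr mulr_algl.
  by rewrite addrAC subrr add0r scalerA q0V scale1r.
have [h1 h2] := IH hb.
rewrite J_S // Jinv_S //; split.
- by nrm; rw (XXi hb); rw h1; rw (XXi hb).
- by nrm; rw (XiX hb); rw h2; rw (XiX hb).
Qed.

Lemma comm_mul a b c : comm a c -> comm b c -> comm (a * b) c.
Proof. by rewrite /comm => h1 h2; rewrite -mulrA h2 mulrA h1 mulrA. Qed.
Lemma commC a b : comm a b -> comm b a. Proof. by rewrite /comm. Qed.

Section Adj.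
Variable a : nat.
Hypothesis ha : (1 <= a)%N.
Let hP : (1 <= a.+1)%N. Proof. by lia. Qed.
Lemma braid1 : X a * X a.+1 * X a = X a.+1 * X a * X a.+1.
Proof. exact: (ax_braid ax ha hP (adjS' a)). Qed.
Lemma eXX_u : E a * X a.+1 * X a = X a.+1 * X a * E a.+1.
Proof. exact: (ax_eXX ax true ha hP (adjS' a)). Qed.
Lemma eXX_d : E a.+1 * X a * X a.+1 = X a * X a.+1 * E a.
Proof. exact: (ax_eXX ax true hP ha (adjS a)). Qed.
Lemma XXe_u : X a.+1 * X a * E a.+1 = E a * E a.+1.
Proof. exact: (ax_XXe ax true hP ha (adjS a)). Qed.
Lemma XXe_d : X a * X a.+1 * E a = E a.+1 * E a.
Proof. exact: (ax_XXe ax true ha hP (adjS' a)). Qed.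
Lemma eee_u : E a.+1 * E a * E a.+1 = E a.+1.
Proof. exact: (ax_eee ax hP ha (adjS a)). Qed.
Lemma eee_d : E a * E a.+1 * E a = E a.
Proof. exact: (ax_eee ax ha hP (adjS' a)). Qed.
Lemma eeXi_u : E a.+1 * E a * Xi a.+1 = E a.+1 * X a.
Proof. exact: (ax_eeX ax false hP ha (adjS a)). Qed.
Lemma eeX_u : E a.+1 * E a * X a.+1 = E a.+1 * Xi a.
Proof. exact: (ax_eeX ax true hP ha (adjS a)). Qed.
Lemma Xee_u : X a.+1 * E a * E a.+1 = Xi a * E a.+1.
Proof. exact: (ax_Xee ax true hP ha (adjS a)). Qed.
Lemma Xiee_u : Xi a.+1 * E a * E a.+1 = X a * E a.+1.
Proof. exact: (ax_Xee ax false hP ha (adjS a)). Qed.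
Lemma eXX'_u : E a.+1 * X a * X a.+1 = E a.+1 * E a.
Proof. exact: (ax_eXX' ax true hP ha (adjS a)). Qed.
Lemma eXe_u : E a.+1 * X a * E a.+1 = lam^-1 *: E a.+1.
Proof. exact: (ax_eXe ax true hP ha (adjS a)). Qed.
Lemma XeX_u : X a.+1 * E a * X a.+1 = Xi a * E a.+1 * Xi a.
Proof. exact: (ax_XeX ax hP ha (adjS a)). Qed.
Lemma XeXi_u : X a.+1 * E a * Xi a.+1 = Xi a * E a.+1 * X a.
Proof. exact: (ax_XeXinv ax hP ha (adjS a)). Qed.
End Adj.

Lemma XP_J a : (1 <= a)%N -> X a.+1 * J a = J a * X a.+1.
Proof. by move=> h; case: (BB_high (J_BB h) (ltnSn a)) => ->. Qed.
Lemma EP_J a : (1 <= a)%N -> E a.+1 * J a = J a * E a.+1.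
Proof. by move=> h; case: (BB_high (J_BB h) (ltnSn a)) => _ [-> _]. Qed.
Lemma XiP_J a : (1 <= a)%N -> Xi a.+1 * J a = J a * Xi a.+1.
Proof. by move=> h; case: (BB_high (J_BB h) (ltnSn a)) => _ [_ ->]. Qed.

Lemma JC b : (1 <= b)%N -> comm (J b.+1) Y /\
  (forall i, (1 <= i)%N -> (i < b)%N -> comm (J b.+1) (X i) /\ comm (J b.+1) (E i)).
Proof.
elim: b => // b IH hb; case: (posnP b) => [bz|bp].
  subst b; split; last by move=> i h1 h2; lia.
  rewrite /comm J_S // J1; nrm; rw (ax_YX1 ax); done.
have [IHY IHi] := IH bp.
have hXY : comm (X b.+1) Y by rewrite /comm (ax_YX ax) //; lia.
split; first by rewrite J_S //; do 2! apply: comm_mul => //.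
move=> i h1 h2; case: (ltnP i b) => hib.
  have [c1 c2] := IHi i h1 hib.
  have c3 : comm (X b.+1) (X i) by apply: (ax_XX_far ax) => //; apply: farL; lia.
  have c4 : comm (X b.+1) (E i) by apply: (ax_Xe_far ax) => //; apply: farL; lia.
  by rewrite J_S //; split; do 2! apply: comm_mul => //.
have -> : i = b by lia.
rewrite /comm !J_S //; split.
- nrm; rw (braid1 bp); rewrite [in X in _ = X](ctx2 (XP_J bp)); nrm.
  by rw (esym (braid1 bp)).
- nrm; rw (eXX_u bp); rw (EP_J bp); by rw (eXX_d bp).
Qed.

Lemma J_comm b a : (1 <= b)%N -> BB b a -> comm (J b.+1) a.
Proof.
move=> hb hB; have [hY hi] := JC hb.
apply: (comm_BB _ _ _ hB) => // i h1 h2; by case: (hi i h1 h2).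
Qed.

Lemma JXJE b : (1 <= b)%N -> J b * X b * J b * E b = E b.
Proof.
elim: b => // b IH _; case: (posnP b) => [bz|bp].
  by subst b; rewrite J1; exact: (ax_YXYe ax).
rewrite J_S //; nrm; rw (braid1 bp).
rw (XP_J bp); rw (esym (XP_J bp)).
rw (XXe_u bp); rw (IH bp); rw (XXe_d bp).
by rw (eee_u bp).
Qed.

Lemma XJE b : (1 <= b)%N -> X b * J b * E b = Jinv b * E b.
Proof.
move=> hb; rewrite -[in RHS](JXJE hb) !mulrA.
by case: (JJinv hb) => _ ->; rewrite mul1r.
Qed.

Lemma JpE b : (1 <= b)%N -> J b.+1 * E b = lam *: (Jinv b * E b).
Proof.
move=> hb; rewrite J_S // -mulrA XE // -scalerAr XJE //.
Qed.

Lemma EYE k : (1 <= k)%N -> E k * bYk D k * E k = bA D *: E k.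
Proof.
elim: k => // k IH _; case: (posnP k) => [kz|kp].
  by subst k; exact: (ax_eYe ax).
rewrite bYk_S //; nrm; rw (esym (eeXi_u kp)).
rw (esym (Xee_u kp)).
have hc : Xi k.+1 * bYk D k = bYk D k * Xi k.+1.
  by case: (BB_high (bYk_BB kp) (ltnSn k)) => _ [_ ->].
rw hc; rw (XiX (ltn0Sn k)); rw (IH kp); by rw (eee_u kp).
Qed.


Inductive Sp (m : nat) (G : A -> Prop) : A -> Prop :=
  | sp_gen v g w : BB m v -> G g -> BB m w -> Sp m G (v * g * w)
  | sp_add a b : Sp m G a -> Sp m G b -> Sp m G (a + b).

Section SpTh.
Variables (m : nat) (G : A -> Prop).
Hypothesis G1 : G 1.
Lemma Sp_mull v s : BB m v -> Sp m G s -> Sp m G (v * s).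
Proof.
move=> hv; elim=> [v' g w hv' hg hw|a b _ ha _ hb].
  by rewrite !mulrA; apply: sp_gen => //; apply: bb_mul.
by rewrite mulrDr; apply: sp_add.
Qed.
Lemma Sp_mulr v s : BB m v -> Sp m G s -> Sp m G (s * v).
Proof.
move=> hv; elim=> [v' g w hv' hg hw|a b _ ha _ hb].
  by rewrite -mulrA; apply: sp_gen => //; try apply: bb_mul.
by rewrite mulrDl; apply: sp_add.
Qed.
Lemma Sp_scale r s : Sp m G s -> Sp m G (r *: s).
Proof. by move=> h; rewrite -mulr_algl; apply: Sp_mull => //; apply: bb_scal. Qed.
Lemma Sp_opp s : Sp m G s -> Sp m G (- s).
Proof. by move=> h; rewrite -scaleN1r; apply: Sp_scale. Qed.
Lemma Sp_sub s t : Sp m G s -> Sp m G t -> Sp m G (s - t).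
Proof. by move=> h1 h2; apply: sp_add => //; apply: Sp_opp. Qed.
Lemma Sp_g g : G g -> Sp m G g.
Proof. by move=> h; rewrite -(mul1r g) -(mulr1 (1 * g)); apply: sp_gen => //; apply: BB_1. Qed.
Lemma Sp_vg v g : BB m v -> G g -> Sp m G (v * g).
Proof. by move=> h1 h2; rewrite -(mulr1 (v * g)); apply: sp_gen => //; apply: BB_1. Qed.
Lemma Sp_gw g w : G g -> BB m w -> Sp m G (g * w).
Proof. by move=> h1 h2; rewrite -(mul1r g); apply: sp_gen => //; apply: BB_1. Qed.
Lemma Sp_v v : BB m v -> Sp m G v.
Proof. by move=> h; rewrite -(mulr1 v); apply: Sp_vg. Qed.
End SpTh.

Definition newgen m g := (m = 0%N /\ g = Y) \/ ((1 <= m)%N /\ (g = X m \/ g = E m)).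

Lemma Sp_closed m G : G 1 ->
  (forall v gm w g, BB m v -> G gm -> BB m w -> newgen m g -> Sp m G (v * gm * w * g)) ->
  forall a, BB m.+1 a -> Sp m G a.
Proof.
move=> G1 H.
have H1 : forall s g, Sp m G s -> newgen m g -> Sp m G (s * g).
  move=> s g hs hg; elim: hs => [v gm w hv hgm hw|a b _ ha _ hb]; first exact: H.
  by rewrite mulrDl; apply: sp_add.
have H2 : forall a, BB m.+1 a -> forall s, Sp m G s -> Sp m G (s * a).
  move=> a; elim.
  - by move=> r s hs; apply: Sp_mulr => //; apply: bb_scal.
  - move=> _ s hs; case: (posnP m) => [mz|mp].
      by apply: H1 => //; left.
    by apply: Sp_mulr => //; apply: bb_Y.
  - move=> i h1 h2 s hs; case: (ltnP i m) => hi; first by apply: Sp_mulr => //; apply: bb_X.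
    have -> : i = m by lia.
    by apply: H1 => //; right; split; [lia | left].
  - move=> i h1 h2 s hs; case: (ltnP i m) => hi; first by apply: Sp_mulr => //; apply: bb_e.
    have -> : i = m by lia.
    by apply: H1 => //; right; split; [lia | right].
  - by move=> a1 b1 _ h1 _ h2 s hs; rewrite mulrDr; apply: sp_add; [apply: h1 | apply: h2].
  - by move=> a1 b1 _ h1 _ h2 s hs; rewrite mulrA; apply: h2; apply: h1.
move=> a ha; rewrite -(mul1r a); apply: H2 => //.
by apply: Sp_g.
Qed.

Definition Gam (b : nat) (g : A) : Prop :=
  if b is 0 then (g = 1 \/ g = Y)
  else (g = 1 \/ g = E b \/ g = X b \/ g = J b.+1 \/ g = E b * J b.+1).

Lemma Gam1 b : Gam b 1. Proof. by case: b => /=; left. Qed.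

Lemma Gam_BB k g : Gam k g -> BB k.+1 g.
Proof.
case: k => [|k] /=.
  by case=> ->; [apply: BB_1 | apply: bb_Y].
have hk : (1 <= k.+1)%N by [].
case=> [->|[->|[->|[->|->]]]].
- exact: BB_1.
- exact: bb_e.
- exact: bb_X.
- exact: J_BB.
- by apply: bb_mul; [apply: bb_e | apply: J_BB].
Qed.

Lemma Gam_comm k g u : Gam k.+1 g -> BB k u -> comm g u.
Proof.
move=> hg hu; have hu' : BB k.+1 u by apply: (BB_mono (m:=k)).
have hh := BB_high hu (ltnSn k).
move: hg => /= [->|[->|[->|[->|->]]]].
- by rewrite /comm mul1r mulr1.
- by case: hh => _ [].
- by case: hh.
- exact: (J_comm (ltn0Sn k) hu').
- by apply: comm_mul; [case: hh => _ [] | exact: (J_comm (ltn0Sn k) hu')].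
Qed.

Definition Ex b := forall a, BB b.+1 a -> exists z, BB b z /\ E b.+1 * a * E b.+1 = z * E b.+1.

Lemma Ex_from b : (forall a, BB b.+1 a -> Sp b (Gam b) a) ->
  (forall g, Gam b g -> exists z, BB b z /\ E b.+1 * g * E b.+1 = z * E b.+1) -> Ex b.
Proof.
move=> HS HG a ha; elim: (HS a ha) => [v g w hv hg hw|a1 b1 _ [z1 [h1 e1]] _ [z2 [h2 e2]]].
  have [z [hz ez]] := HG g hg.
  exists (v * z * w); split; first by apply: bb_mul => //; apply: bb_mul.
  have [_ [cv _]] := BB_high hv (ltnSn b); have [_ [cw _]] := BB_high hw (ltnSn b).
  rewrite /comm in cv cw.
  rewrite !mulrA cv -!mulrA -cw; rw ez; by rewrite cw !mulrA.
exists (z1 + z2); split; first by apply: bb_add.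
by rewrite mulrDr mulrDl e1 e2 mulrDl.
Qed.


Ltac rwl H := first [rewrite [in X in X = _](ctx4 H) | rewrite [in X in X = _](ra4 H)
   | rewrite [in X in X = _](ctx3 H) | rewrite [in X in X = _](ra3 H)
   | rewrite [in X in X = _](ctx2 H) | rewrite [in X in X = _]H]; nrm.


Lemma Gam_cases k g : Gam k g ->
  g = 1 \/ g = J k.+1 \/ ((1 <= k)%N /\ (g = E k \/ g = X k \/ g = E k * J k.+1)).
Proof.
case: k => [|k] /=; first by case=> ->; [left | right; left; rewrite J1].
case=> [->|[->|[->|[->|->]]]]; try by [left | right; left].
- by right; right; split=> //; left.
- by right; right; split=> //; right; left.
- by right; right; split=> //; right; right.
Qed.

Lemma JpX b : (1 <= b)%N ->
  J b.+1 * X b = X b * J b + del *: J b.+1 - (del * lam) *: (Jinv b * E b).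
Proof.
move=> hb; rewrite !J_S // -!mulrA (ax_XX ax hb) !mulrDr !mulrN -!scalerAr mulr1.
by rewrite !mulrA XJE.
Qed.

Lemma XEJX k : (1 <= k)%N ->
  X k.+1 * E k * J k.+1 * X k.+1 = Xi k * E k.+1 * X k * J k.+2.
Proof.
move=> hk; rewrite (J_S (ltn0Sn k)) -(XeXi_u hk); nrm; by rw (XiX (ltn0Sn k)).
Qed.

Lemma T2 b : (1 <= b)%N -> E b.+1 * E b * J b * X b * E b.+1 = Jinv b * E b.+1.
Proof.
move=> hb; nrm; rw (esym (Xiee_u hb)); rw (esym (XiP_J hb)); rw (eeXi_u hb); rw (XJE hb).
have hc : E b.+1 * Jinv b = Jinv b * E b.+1.
  by case: (BB_high (Jinv_BB hb) (ltnSn b)) => _ [-> _].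
by rw hc; rw (eee_u hb).
Qed.

Section Level.
Variable k : nat.
Hypothesis ExK : Ex k.
Local Notation b := k.+1.
Local Notation Sb := (Sp k.+1 (Gam k.+1)).
Let hb : (1 <= b)%N. Proof. by []. Qed.

Lemma G_E : Gam b (E b). Proof. by right; left. Qed.
Lemma G_X : Gam b (X b). Proof. by right; right; left. Qed.
Lemma G_J : Gam b (J b.+1). Proof. by right; right; right; left. Qed.
Lemma G_EJ : Gam b (E b * J b.+1). Proof. by right; right; right; right. Qed.

Lemma EVE v : BB b v -> exists z, BB b z /\ E b * v * E b = z * E b.
Proof.
move=> hv; have [z [hz ez]] := ExK hv; exists z; split=> //.
exact: (BB_mono (m:=k)).
Qed.
Lemma EVE_S v : BB b v -> Sb (E b * v * E b).
Proof. by move=> hv; have [z [hz ->]] := EVE hv; apply: Sp_vg => //; apply: G_E. Qed.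

Lemma JX_S : Sb (J b.+1 * X b).
Proof.
rewrite JpX //; apply: Sp_sub; first apply: sp_add.
- by apply: Sp_gw; [apply: G_X | apply: J_BB].
- by apply: Sp_scale; apply: Sp_g; apply: G_J.
- by apply: Sp_scale; apply: Sp_vg; [apply: Jinv_BB | apply: G_E].
Qed.
Lemma JE_S : Sb (J b.+1 * E b).
Proof. by rewrite JpE //; apply: Sp_scale; apply: Sp_vg; [apply: Jinv_BB | apply: G_E]. Qed.

Lemma EgX g : Gam k g -> Sb (E b * g * X b).
Proof.
case/Gam_cases => [->|[->|[hk [->|[->|->]]]]].
- by rewrite mulr1 EX //; apply: Sp_scale; apply: Sp_g; apply: G_E.
- have -> : E b * J b * X b = lam^-1 *: (E b * J b.+1).
    by rewrite (J_S hb); nrm; rw (EX hb); rewrite scalerA lamV scale1r.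
  by apply: Sp_scale; apply: Sp_g; apply: G_EJ.
- by rewrite (eeX_u hk); apply: Sp_gw; [apply: G_E | apply: BB_Xi].
- by rewrite (eXX'_u hk); apply: Sp_gw; [apply: G_E | apply: bb_e].
- rewrite mulrA -(eXX'_u hk) -!mulrA (ra3 (esym (J_S hb))).
  rewrite -(J_comm hb (bb_X D hk (ltnSn k))) mulrA.
  by apply: Sp_gw; [apply: G_EJ | apply: bb_X].
Qed.

Lemma XgX g : Gam k g -> Sb (X b * g * X b).
Proof.
case/Gam_cases => [->|[->|[hk [->|[->|->]]]]].
- rewrite mulr1 (ax_XX ax hb); apply: Sp_sub; first apply: sp_add.
  + by apply: Sp_v; [apply: Gam1 | apply: BB_1].
  + by apply: Sp_scale; apply: Sp_g; apply: G_X.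
  + by apply: Sp_scale; apply: Sp_g; apply: G_E.
- by rewrite -J_S //; apply: Sp_g; apply: G_J.
- by rewrite (XeX_u hk); apply: sp_gen; [apply: BB_Xi | apply: G_E | apply: BB_Xi].
- by rewrite -(braid1 hk); apply: sp_gen; [apply: bb_X | apply: G_X | apply: bb_X].
- rewrite mulrA XEJX //.
  have -> : Xi k * E b * X k * J b.+1 = Xi k * (E b * J b.+1) * X k.
    by rewrite -!mulrA (J_comm hb (bb_X D hk (ltnSn k))).
  by apply: sp_gen; [apply: BB_Xi | apply: G_EJ | apply: bb_X].
Qed.

Lemma XgE g : Gam k g -> Sb (X b * g * E b).
Proof.
case/Gam_cases => [->|[->|[hk [->|[->|->]]]]].
- by rewrite mulr1 XE //; apply: Sp_scale; apply: Sp_g; apply: G_E.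
- by rewrite XJE //; apply: Sp_vg; [apply: Jinv_BB | apply: G_E].
- by rewrite (Xee_u hk); apply: Sp_vg; [apply: BB_Xi | apply: G_E].
- by rewrite (XXe_u hk); apply: Sp_vg; [apply: bb_e | apply: G_E].
- rewrite {1}(_ : E b = lam^-1 *: (X b * E b)); last by rewrite XE // scalerA lamV scale1r.
  rewrite -scalerAr !mulrA XEJX // -(mulrA _ (J _) (E _)) JpE // -scalerAr scalerA lamV scale1r.
  have hv : BB b (X k * Jinv b) by apply: bb_mul; [apply: bb_X | apply: Jinv_BB].
  have [z [hz ez]] := EVE hv.
  rewrite -!mulrA (mulrA (X k)) (mulrA (E b)) ez mulrA.
  by apply: Sp_vg; [apply: bb_mul; [apply: BB_Xi | ] | apply: G_E].
Qed.

Lemma Key gm g g' : Gam b gm -> Gam k g' -> newgen b g -> Sb (gm * g' * g).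
Proof.
move=> hgm hg' hg; have hv' := Gam_BB hg'.
have {}hg : g = X b \/ g = E b by case: hg => [[//]|[_ //]].
move: hgm => /= [->|[->|[->|[->|->]]]].
- by rewrite mul1r; case: hg => ->; apply: Sp_vg => //; [apply: G_X | apply: G_E].
- case: hg => ->; first exact: EgX.
  exact: EVE_S.
- by case: hg => ->; [apply: XgX | apply: XgE].
- rewrite (J_comm hb hv') -mulrA; apply: Sp_mull => //.
  by case: hg => ->; [apply: JX_S | apply: JE_S].
- rewrite -(mulrA (E b)) (J_comm hb hv') mulrA -mulrA.
  case: hg => ->.
  + rewrite JpX // !mulrDr !mulrN; apply: Sp_sub; first apply: sp_add.
    * by rewrite mulrA; apply: Sp_mulr; [apply: J_BB | apply: EgX].
    * rewrite -scalerAr; apply: Sp_scale.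
      rewrite -mulrA -(J_comm hb hv') mulrA; apply: Sp_gw => //; exact: G_EJ.
    * rewrite -scalerAr; apply: Sp_scale; rewrite !mulrA -(mulrA (E b)).
      by apply: EVE_S; apply: bb_mul => //; apply: Jinv_BB.
  + rewrite JpE // -scalerAr; apply: Sp_scale; rewrite !mulrA -(mulrA (E b)).
    by apply: EVE_S; apply: bb_mul => //; apply: Jinv_BB.
Qed.

End Level.


Lemma ra5 (a b c d f g : A) : a * b * c * d * f = g -> a * (b * (c * (d * f))) = g.
Proof. by move=> H; rewrite !mulrA H. Qed.

Lemma SpanStep k : Ex k -> (forall a, BB k.+1 a -> Sp k (Gam k) a) ->
  forall a, BB k.+2 a -> Sp k.+1 (Gam k.+1) a.
Proof.
move=> ExK SpK; apply: Sp_closed; first exact: Gam1.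
move=> v gm w g hv hgm hw hg.
elim: (SpK w hw) => [u g' u' hu hg' hu'|w1 w2 _ h1 _ h2].
- have c1 : comm gm u := Gam_comm hgm hu.
  have c2 : comm u' g.
    have [hX [hE _]] := BB_high hu' (ltnSn k).
    by case: hg => [[//]|[_ [->|->]]]; apply: commC.
  have -> : v * gm * (u * g' * u') * g = (v * u) * (gm * g' * g) * u'.
    rewrite !mulrA -(mulrA v gm u) c1 !mulrA -(mulrA _ u' g) c2.
    by rewrite !mulrA.
  apply: Sp_mulr; first exact: (BB_mono (m:=k)).
  apply: Sp_mull; first by apply: bb_mul => //; apply: (BB_mono (m:=k)).
  exact: Key.
- by rewrite mulrDr mulrDl; apply: sp_add.
Qed.

Lemma ExGam0 g : Gam 0 g -> exists z, BB 0 z /\ E 1 * g * E 1 = z * E 1.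
Proof.
case=> ->.
- by exists (xp%:A); split; [apply: bb_scal | rewrite mulr1 EE // mulr_algl].
- by exists ((bA D)%:A); split; [apply: bb_scal | rewrite (ax_eYe ax) mulr_algl].
Qed.

Lemma XiXc b : (1 <= b)%N -> Xi b.+1 * X b * E b.+1 =
  E b * E b.+1 - del *: (X b * E b.+1) + (del * lam^-1) *: E b.+1.
Proof.
move=> hb; rewrite /bXinv [in X in X = _]mulrDl [in X in X = _]mulrDl [in X in X = _]mulrDl [in X in X = _]mulrDl.
rewrite [in X in X = _]mulNr [in X in X = _]mulNr (XXe_u hb) -!scalerAl !mul1r.
by rewrite -!mulrA (ra3 (eXe_u hb)) scalerA.
Qed.

Lemma ExGamS k : Ex k -> forall g, Gam k.+1 g ->
  exists z, BB k.+1 z /\ E k.+2 * g * E k.+2 = z * E k.+2.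
Proof.
move=> ExK g; have hb : (1 <= k.+1)%N by [].
have hc : forall z, BB k.+1 z -> E k.+2 * z = z * E k.+2.
  by move=> z hz; case: (BB_high hz (ltnSn k.+1)) => _ [-> _].
case=> [->|[->|[->|[->|->]]]].
- by exists (xp%:A); split; [apply: bb_scal | rewrite mulr1 EE // mulr_algl].
- by exists 1; split; [apply: BB_1 | rewrite (eee_u hb) mul1r].
- by exists (lam^-1%:A); split; [apply: bb_scal | rewrite (eXe_u hb) mulr_algl].
- have [z1 [hz1 ez1]] := ExK _ (J_BB hb).
  exists (z1 - del *: Jinv k.+1 + (del * lam^-1) *: J k.+1); split.
    apply: bb_add; first apply: BB_sub.
    + exact: (BB_mono (m:=k)).
    + by apply: BB_scale; apply: Jinv_BB.
    + by apply: BB_scale; apply: J_BB.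
  rewrite (J_S hb); nrm; rw (esym (eeXi_u hb)); rw (XiP_J hb).
  rewrite (ra3 (XiXc hb)) !mulrDr !mulrN -!scalerAr.
  have t1 : E k.+2 * (E k.+1 * (J k.+1 * (E k.+1 * E k.+2))) = z1 * E k.+2.
    rw ez1; rewrite mulrA hc; last exact: (BB_mono (m:=k)).
    by rewrite -mulrA (ra3 (eee_u hb)).
  have t2 : E k.+2 * (E k.+1 * (J k.+1 * (X k.+1 * E k.+2))) = Jinv k.+1 * E k.+2.
    exact: (ra5 (T2 hb)).
  have t3 : E k.+2 * (E k.+1 * (J k.+1 * E k.+2)) = J k.+1 * E k.+2.
    by rewrite -(EP_J hb) !mulrA (eee_u hb) (EP_J hb).
  by rewrite t1 t2 t3 (mulrDl (z1 - del *: Jinv k.+1)) (mulrDl z1) mulNr -!scalerAl.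
- exists (lam *: Jinv k.+1); split; first by apply: BB_scale; apply: Jinv_BB.
  rewrite (J_S hb); nrm; rw (EX hb); rewrite (ra5 (T2 hb)).
  done.
Qed.

Lemma SpEx b : (forall a, BB b.+1 a -> Sp b (Gam b) a) /\ Ex b.
Proof.
elim: b => [|k [SpK ExK]].
  have S0 : forall a, BB 1 a -> Sp 0 (Gam 0) a.
    apply: Sp_closed; first exact: (Gam1 0).
    move=> v gm w g hv hgm hw hg.
    have {}hg : g = Y by case: hg => [[_ ->]|[]].
    subst g; have [s ->] := BB0_scalar hw.
    have -> : v * gm * s%:A * Y = v * (gm * Y) * s%:A.
      by rewrite -!mulrA mulr_algl mulr_algr.
    case: hgm => ->.
    + by rewrite mul1r; apply: sp_gen => //; [right | apply: bb_scal].
    + rewrite (ax_Y2 ax); apply: Sp_mulr; first exact: bb_scal.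
      apply: Sp_mull => //; apply: sp_add.
      * by apply: Sp_scale; apply: Sp_g; right.
      * by apply: Sp_v; [left | apply: bb_scal].
  by split=> //; apply: Ex_from => //; apply: ExGam0.
have S1 := SpanStep ExK SpK.
by split=> //; apply: Ex_from => //; apply: ExGamS.
Qed.

Lemma beps_eq m a z : BB m z -> E m.+1 * a * E m.+1 = xp *: (z * E m.+1) -> beps D m a = z.
Proof.
move=> hz h; rewrite /beps.
set P := (fun z0 => _).
have := @epsilon_spec A (inhabits 0) P (ex_intro _ z (conj hz h)).
set w := epsilon _ _; case=> hw ew.
apply: (ax_inj ax hw hz).
have : xp^-1 *: (xp *: (w * E m.+1)) = xp^-1 *: (xp *: (z * E m.+1)) by rewrite -ew -h.
by rewrite !scalerA xV !scale1r => ->.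
Qed.

Lemma beps_ex m a : BB m.+1 a -> exists z, BB m z /\ beps D m a = z /\
   forall c, beps D m (c *: a) = c *: z.
Proof.
move=> ha; have [z' [hz' ez']] := (SpEx m).2 a ha.
have hz : BB m (xp^-1 *: z') by apply: BB_scale.
have E1 : E m.+1 * a * E m.+1 = xp *: (xp^-1 *: z' * E m.+1).
  by rewrite -scalerAl scalerA xV' scale1r ez'.
exists (xp^-1 *: z'); split=> //; split; first exact: beps_eq.
move=> c; apply: beps_eq; first exact: BB_scale.
by rewrite -scalerAr -scalerAl E1 -!scalerAl !scalerA mulrCA mulrA.
Qed.

Lemma btr_scal m r : btr D m r%:A = r.
Proof.
elim: m => [|m IH] /=.
  set P := (fun r0 : R => _).
  have := @epsilon_spec R (inhabits 0) P (ex_intro _ r erefl).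
  by move/alg_inj.
rewrite (@beps_eq m _ r%:A) //; first by apply: bb_scal.
by rewrite mulr_algr mulr_algl -scalerAl EE // !scalerA mulrC.
Qed.

Lemma btr_lin m c w : BB m w -> btr D m (c *: w) = c * btr D m w.
Proof.
elim: m c w => [|m IH] c w hw.
  by have [r ->] := BB0_scalar hw; rewrite scalerA !btr_scal.
have [z [hz [e1 e2]]] := beps_ex hw.
by rewrite /= e2 e1 IH.
Qed.


Lemma main_g n g t : (1 <= n)%N -> E n.+1 * g * E n.+1 = t *: E n.+1 ->
  forall w1 w2, BB n w1 -> BB n w2 ->
  beps D n (w1 * g * w2) = btr D n.+1 g *: (w1 * w2) /\
  btr D n.+1 (w1 * g * w2) = btr D n.+1 g * btr D n (w1 * w2).
Proof.
move=> hn hg.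
have key : forall w1 w2, BB n w1 -> BB n w2 ->
    beps D n (w1 * g * w2) = (xp^-1 * t) *: (w1 * w2).
  move=> w1 w2 h1 h2; apply: beps_eq; first by apply: BB_scale; apply: bb_mul.
  have [_ [c1 _]] := BB_high h1 (ltnSn n); have [_ [c2 _]] := BB_high h2 (ltnSn n).
  rewrite /comm in c1 c2.
  nrm; rw c1; rw (esym c2); rw hg; rw c2.
  by rewrite scalerA (mulrA xp) xV' mul1r.
have tg : btr D n.+1 g = xp^-1 * t.
  have := key 1 1 (BB_1 _) (BB_1 _); rewrite !mulr1 mul1r /= => ->.
  exact: btr_scal.
move=> w1 w2 h1 h2; rewrite tg key //; split=> //.
by rewrite /= key // btr_lin //; apply: bb_mul.
Qed.

End Proof.

Theorem lemma12 (R : idomainType) (A : algType R) (D : @BBdata R A) :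
  BBaxioms D ->
  forall n : nat, (1 <= n)%N ->
  forall w1 w2 : A, inBB D n w1 -> inBB D n w2 ->
  forall g : A, g \in [:: 1; be D n; bX D n; bYk D n.+1] ->
    beps D n (w1 * g * w2) = btr D n.+1 g *: (w1 * w2) /\
    btr D n.+1 (w1 * g * w2) = btr D n.+1 g * btr D n (w1 * w2).
Proof.
move=> ax n hn w1 w2 h1 h2 g; rewrite !inE => /or4P [] /eqP ->.
- have hg : be D n.+1 * 1 * be D n.+1 = bx D *: be D n.+1 by rewrite mulr1 (ax_ee ax).
  exact: (main_g ax hn hg h1 h2).
- have hg : be D n.+1 * be D n * be D n.+1 = 1 *: be D n.+1 by rewrite (eee_u ax hn) scale1r.
  exact: (main_g ax hn hg h1 h2).
- exact: (main_g ax hn (eXe_u ax hn) h1 h2).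
- exact: (main_g ax hn (EYE ax (ltn0Sn n)) h1 h2).
Qed.
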